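(* Let $X_\Sigma$ be a projective toric variety, $D\in\mathrm{Amp}(X_\Sigma)_{\mathbf R}$ and $x\in\mathbf C^{\Sigma(1)}$. Then the linear function $\langle\chi_D,-\rangle:\Gamma(G)_{\mathbf R}\to\mathbf R$ takes a negative value on the cone $\sigma_x$ if and only if $x\in Z(\Sigma)$.
   Context: $\Sigma$ complete fan with rays $\Sigma(1)$, primitive generators $u_\rho$, divisors $D_\rho$. A primitive collection is $C\subset\Sigma(1)$ not contained in $\sigma(1)$ for any cone $\sigma\in\Sigma$ while every proper subset is; $Z(\Sigma)=\bigcup_CV(x_\rho:\rho\in C)\subset\mathbf C^{\Sigma(1)}=\mathrm{Spec}\,\mathbf C[x_\rho:\rho\in\Sigma(1)]$. $\Gamma(G)=\{b\in\mathbf Z^{\Sigma(1)}:\sum_\rho b_\rho u_\rho=0\}$ (one-parameter subgroups of $G=\mathrm{Hom}(\mathrm{Cl}(X_\Sigma),\mathbf C^\times)$); for $D=\sum a_\rho D_\rho$, $\langle\chi_D,b\rangle=\sum a_\rho b_\rho$, extended $\mathbf R$-linearly to $\mathrm{Pic}(X_\Sigma)_{\mathbf R}\times\Gamma(G)_{\mathbf R}$. $\mathrm{Amp}(X_\Sigma)_{\mathbf R}$ is the ample cone (real cone over ample divisors in $\mathrm{Pic}(X_\Sigma)_{\mathbf R}$). $\sigma_x=\{v\in\Gamma(G)_{\mathbf R}:v_\rho\ge0\text{ for all }\rho\text{ with }x_\rho\ne0\}$. *)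

(* Defs.v *)
From mathcomp Require Import all_boot all_order all_algebra.
From mathcomp Require Import reals.
From mathcomp Require Export complex.
Set Implicit Arguments. Unset Strict Implicit. Unset Printing Implicit Defensive.
Import Order.TTheory GRing.Theory Num.Theory.
Local Open Scope ring_scope.

Section Toric.
Variable R : realType.
(* N = Z^n, rays of the fan indexed by 'I_r, primitive generators u rho in Z^n *)
Variables (n r : nat) (u : 'I_r -> 'I_n -> int).
(* A fan is recorded by the ray sets sigma(1) of its cones *)
Variable Sigma : {set {set 'I_r}}.

Definition dotR (m v : 'I_n -> R) : R := \sum_(i < n) m i * v i.
Definition uR (rho : 'I_r) : 'I_n -> R := fun i => (u rho i)%:~R.

Definition in_cone (S : {set 'I_r}) (v : 'I_n -> R) : Prop :=
  exists lam : 'I_r -> R, (forall rho, 0 <= lam rho) /\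
    forall i, v i = \sum_(rho in S) lam rho * uR rho i.

Definition face_of (S : {set 'I_r}) (F : ('I_n -> R) -> Prop) : Prop :=
  exists m : 'I_n -> R, (forall v, in_cone S v -> 0 <= dotR m v) /\
    forall v, F v <-> (in_cone S v /\ dotR m v = 0).

(* Sigma is a fan of strongly convex rational polyhedral cones whose cone with
   ray set S has exactly the rays u_rho (rho in S), and Sigma(1) = 'I_r *)
Definition is_fan : Prop :=
  [/\ (forall S, S \in Sigma -> forall v, in_cone S v ->
          in_cone S (fun i => - v i) -> v = (fun _ => 0)),
      (forall S, S \in Sigma -> forall F, face_of S F ->
          exists2 T, T \in Sigma & forall v, F v <-> in_cone T v),
      (forall S T, S \in Sigma -> T \in Sigma ->
          face_of S (fun v => in_cone S v /\ in_cone T v) /\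
          face_of T (fun v => in_cone S v /\ in_cone T v)),
      (forall rho, [set rho] \in Sigma) &
      ((forall rho rho', (forall v, in_cone [set rho] v <-> in_cone [set rho'] v) ->
          rho = rho') /\
       (forall S, S \in Sigma -> forall rho,
          rho \in S <-> face_of S (in_cone [set rho])))].

Definition primitive_gens : Prop :=
  forall rho (k : int) (w : 'I_n -> int), (forall i, u rho i = k * w i) ->
    k = 1 \/ k = -1.

Definition complete_fan : Prop := forall v : 'I_n -> R, exists2 S, S \in Sigma & in_cone S v.

Definition max_cone (S : {set 'I_r}) : Prop :=
  S \in Sigma /\ forall T, T \in Sigma -> S \subset T -> T = S.

Definition dotZ (m w : 'I_n -> int) : int := \sum_(i < n) m i * w i.

(* An integral torus-invariant divisor D = sum_rho d_rho D_rho on the complete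
   toric variety X_Sigma is ample iff it is Cartier and its support function
   is strictly convex (Cox-Little-Schenck Thm 4.2.8, 6.1.14, Lemma 6.1.13). *)
Definition ample_div (d : 'I_r -> int) : Prop :=
  forall S, max_cone S -> exists m : 'I_n -> int,
    (forall rho, rho \in S -> dotZ m (u rho) = - d rho) /\
    (forall rho, rho \notin S -> - d rho < dotZ m (u rho)).

Definition projective : Prop := exists d, ample_div d.

(* a real divisor a = sum a_rho D_rho whose class lies in Amp(X_Sigma)_R:
   its class is a positive real combination of classes of ample divisors *)
Definition in_Amp (a : 'I_r -> R) : Prop :=
  exists k (c : 'I_k.+1 -> R) (d : 'I_k.+1 -> 'I_r -> int) (m : 'I_n -> R),
    [/\ forall j, 0 < c j, forall j, ample_div (d j) &
        forall rho, a rho = \sum_(j < k.+1) c j * (d j rho)%:~R + dotR m (uR rho)].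

Definition GammaR (b : 'I_r -> R) : Prop :=
  forall i, \sum_(rho < r) b rho * uR rho i = 0.

Definition pairing (a b : 'I_r -> R) : R := \sum_(rho < r) a rho * b rho.

Definition sigma_x (x : 'I_r -> R[i]) (b : 'I_r -> R) : Prop :=
  GammaR b /\ forall rho, x rho != 0 -> 0 <= b rho.

Definition primitive_collection (C : {set 'I_r}) : Prop :=
  (forall S, S \in Sigma -> ~~ (C \subset S)) /\
  (forall C' : {set 'I_r}, C' \proper C -> exists2 S, S \in Sigma & C' \subset S).

Definition in_Z (x : 'I_r -> R[i]) : Prop :=
  exists C, primitive_collection C /\ forall rho, rho \in C -> x rho = 0.

End Toric.

(* Main.v *)
Require Import Defs.
From mathcomp Require Import all_boot all_order all_algebra.
From mathcomp Require Import reals complex.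
Import Order.TTheory GRing.Theory Num.Theory.
Local Open Scope ring_scope.

Lemma gamma_lin (R : realType) (n r : nat) (u : 'I_r -> 'I_n -> int)
  (m : 'I_n -> R) (b : 'I_r -> R) :
  GammaR u b -> \sum_(rho < r) b rho * dotR m (uR R u rho) = 0.
Proof.
move=> Hb.
under eq_bigr => rho _ do rewrite /dotR mulr_sumr.
rewrite exchange_big /= big1 // => i _.
under eq_bigr => rho _ do rewrite mulrCA.
by rewrite -mulr_sumr Hb mulr0.
Qed.

Lemma ample_e (R : realType) (n r : nat) (u : 'I_r -> 'I_n -> int)
  (Sigma : {set {set 'I_r}}) (d : 'I_r -> int) (S : {set 'I_r}) :
  ample_div u Sigma d -> max_cone Sigma S ->
  exists e : 'I_r -> R, [/\ forall rho, rho \in S -> e rho = 0,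
     forall rho, rho \notin S -> 0 < e rho &
     forall b, GammaR u b ->
       \sum_(rho < r) (d rho)%:~R * b rho = \sum_(rho < r) e rho * b rho].
Proof.
move=> Ha HS; have [m [H1 H2]] := Ha S HS.
have hd : forall rho, dotR (fun i => (m i)%:~R) (uR R u rho) = (dotZ m (u rho))%:~R :> R.
  move=> rho; rewrite /dotR /dotZ rmorph_sum; apply: eq_bigr => i _.
  by rewrite rmorphM.
exists (fun rho => (d rho)%:~R + dotR (fun i => (m i)%:~R) (uR R u rho)); split.
- by move=> rho /H1 h; rewrite hd h rmorphN addrN.
- move=> rho /H2 h; rewrite hd -rmorphD ltr0z.
  by rewrite -(ltrD2l (- d rho)) addr0 addrA addNr add0r.
- move=> b Hb.
  rewrite [RHS](eq_bigr (fun rho => (d rho)%:~R * b rho + b rho * dotR (fun i => (m i)%:~R) (uR R u rho))); last first.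
    by move=> rho _ /=; rewrite mulrDl [dotR _ _ * _]mulrC.
  rewrite big_split /=; by rewrite (@gamma_lin R n r u (fun i => (m i)%:~R) b Hb) addr0.
Qed.

Lemma pair_dec (R : realType) (n r : nat) (u : 'I_r -> 'I_n -> int)
  (Sigma : {set {set 'I_r}}) (a : 'I_r -> R) :
  in_Amp u Sigma a -> exists k (c : 'I_k.+1 -> R) (d : 'I_k.+1 -> 'I_r -> int),
   [/\ forall j, 0 < c j, forall j, ample_div u Sigma (d j) &
     forall b, GammaR u b -> pairing a b =
        \sum_(j < k.+1) c j * \sum_(rho < r) (d j rho)%:~R * b rho].
Proof.
move=> [k [c [d [m [Hc Hd Ha]]]]]; exists k, c, d; split => // b Hb.
rewrite /pairing.
under eq_bigr => rho _ do rewrite Ha mulrDl.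
rewrite big_split /=.
rewrite [X in _ + X](_ : _ = \sum_(rho < r) b rho * dotR m (uR R u rho)); last first.
  by apply: eq_bigr => rho _; rewrite mulrC.
rewrite (@gamma_lin R n r u m b Hb) addr0.
under eq_bigr => rho _ do rewrite big_distrl /=.
rewrite exchange_big /=; apply: eq_bigr => j _.
by rewrite mulr_sumr; apply: eq_bigr => rho _; rewrite mulrA.
Qed.

Lemma max_ext (r : nat) (Sigma : {set {set 'I_r}}) (T : {set 'I_r}) :
  T \in Sigma -> exists2 S, max_cone Sigma S & T \subset S.
Proof.
move=> HT.
pose P := [pred S : {set 'I_r} | (S \in Sigma) && (T \subset S)].
have PT : P T by rewrite /= HT subxx.
case: (@arg_maxnP _ T P (fun S => #|S|) PT) => S /andP [HS TS] Hmax.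
exists S => //; split => // T' HT' ST'.
apply/eqP; rewrite eq_sym eqEcard ST' /=.
by apply: Hmax; rewrite /= HT' (subset_trans TS ST').
Qed.

Theorem proposition5p3 (R : realType) (n r : nat) (u : 'I_r -> 'I_n -> int)
    (Sigma : {set {set 'I_r}}) :
  is_fan R u Sigma -> primitive_gens u -> complete_fan R u Sigma ->
  projective u Sigma ->
  forall (a : 'I_r -> R), in_Amp u Sigma a ->
  forall x : 'I_r -> R[i],
    (exists2 b : 'I_r -> R, sigma_x u x b & pairing a b < 0) <-> in_Z Sigma x.
Proof.
move=> _ _ Hcomp _ a Ha x.
have [k [c [d [Hc Hd Hdec]]]] := @pair_dec R n r u Sigma a Ha.
split.
- move=> [b [Hb Hbx] Hneg].
  pose Sx := [set rho | x rho == 0].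
  pose P := [pred C : {set 'I_r} | (C \subset Sx) && [forall S in Sigma, ~~ (C \subset S)]].
  case: (pickP P) => [C0 PC0 | noP].
  + case: (@arg_minnP _ C0 P (fun C => #|C|) PC0) => C /andP [CSx Hall] Hmin.
    exists C; split; [split|].
    * by move=> S HS; move/forall_inP: Hall; apply.
    * move=> C' HC'.
      case: (boolP [exists S in Sigma, C' \subset S]) => [/exists_inP [S HS sub] | none].
        by exists S.
      exfalso.
      have PC' : P C'.
        rewrite /= (subset_trans (proper_sub HC') CSx) /=.
        apply/forall_inP => S HS; apply/negP => sub; move/negP: none; apply.
        by apply/exists_inP; exists S.
      have := Hmin C' PC'; have := proper_card HC'.
      by rewrite /= => h1 h2; move: (leq_ltn_trans h2 h1); rewrite ltnn.
    * by move=> rho /(subsetP CSx); rewrite inE => /eqP.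
  + exfalso.
    have := noP Sx; rewrite /= subxx /= => /negbT; rewrite negb_forall_in.
    case/exists_inP => T HT; rewrite negbK => SxT.
    have [S HS TS] := @max_ext _ _ _ HT.
    move: Hneg; apply/negP; rewrite -leNgt (Hdec b Hb).
    apply: sumr_ge0 => j _; apply: mulr_ge0; first exact: ltW.
    have [e [e0 epos ->]] := @ample_e R n r u Sigma (d j) S (Hd j) HS; last exact: Hb.
    apply: sumr_ge0 => rho _.
    case: (boolP (rho \in S)) => HrS; first by rewrite e0 // mul0r.
    apply: mulr_ge0; first exact: ltW (epos _ HrS).
    apply: Hbx; apply/negP => /eqP h0; move/negP: HrS; apply.
    by apply: (subsetP TS); apply: (subsetP SxT); rewrite inE h0.
- move=> [C [[Hp1 Hp2] Hx]].
  have [T HT [lam [Hlam Hv]]] := Hcomp (fun i => \sum_(rho in C) uR R u rho i).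
  pose b := fun rho => (if rho \in T then lam rho else 0) - (if rho \in C then 1 else 0).
  have Gb : GammaR u b.
    move=> i; rewrite (eq_bigr (fun rho => (if rho \in T then lam rho * uR R u rho i else 0)
       - (if rho \in C then uR R u rho i else 0))); last first.
      by move=> rho _; rewrite /b mulrBl; case: ifP; case: ifP; rewrite ?mul0r ?mul1r.
    by rewrite sumrB -!big_mkcond /= -Hv /= subrr.
  exists b.
    split => // rho hx.
    have HrC : rho \notin C by apply/negP => /Hx h; rewrite h eqxx in hx.
    by rewrite /b (negbTE HrC) subr0; case: ifP => _ //; apply: Hlam.
  rewrite (Hdec b Gb) (bigD1 ord0) //=.
  have Pneg : forall j, \sum_(rho < r) (d j rho)%:~R * b rho < 0.
    move=> j.
    have [S HS TS] := @max_ext _ _ _ HT.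
    have [e [e0 epos ->]] := @ample_e R n r u Sigma (d j) S (Hd j) HS; last exact: Gb.
    have [rho0 HrC HrS] := subsetPn (Hp1 S HS.1).
    have HrT : rho0 \notin T by apply/negP => /(subsetP TS); apply/negP.
    have term : forall rho, rho \notin S -> e rho * b rho = - e rho * (if rho \in C then 1 else 0).
      move=> rho HrS'; have HrT' : rho \notin T by apply/negP => /(subsetP TS); apply/negP.
      by rewrite /b (negbTE HrT') sub0r mulrN mulNr.
    rewrite (bigD1 rho0) //=.
    apply: (lt_le_trans (ltr_leD (_ : _ < 0) (_ : _ <= 0))); last by rewrite addr0.
      by rewrite term // HrC mulr1 oppr_lt0; apply: epos.
    apply: sumr_le0 => rho _; case: (boolP (rho \in S)) => HrS'; first by rewrite e0 // mul0r.
    rewrite term // mulNr oppr_le0; apply: mulr_ge0; first exact: ltW (epos _ HrS').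
    by case: ifP.
  apply: (lt_le_trans (ltr_leD (_ : _ < 0) (_ : _ <= 0))); last by rewrite addr0.
    by rewrite pmulr_rlt0 //; apply: Pneg.
  apply: sumr_le0 => j _; rewrite pmulr_rle0 //; exact: ltW (Pneg j).
Qed.
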